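(* Let $P$ satisfy (S1)–(S4). Let $i_1<\dots<i_\ell$ be integers and let $\bar h=(h_{i_1})_{i_1}\cdots(h_{i_\ell})_{i_\ell}\in H$ with all $h_{i_j}\ne1$. If $\bar h$ is a $[k,t]$-commutator for some integer $k\neq0$ (resp. a $[\pm,t]$-commutator), then $\bar h'=(h_{i_1})_1(h_{i_2})_2\cdots(h_{i_\ell})_\ell$ is also a $[k,t]$-commutator (resp. a $[\pm,t]$-commutator).
   Context: Conditions on a finite group $P$: (S1) for all $a_1,a_2\in P$ there are $x,y$ with $a_2=x^{-1}a_1^{-1}yxy^{-1}$; (S2) for all $a_1,a_2,a_3$ there are $u,v$ with $a_2=a_3ua_1^{-1}a_3^{-1}vu^{-1}v^{-1}$; (S3) for all $u_1,u_2,u_3,u_4\ne1$ there are $x,y,z$ with $u_4=x^{-1}u_1xy^{-1}u_2yz^{-1}u_3z$; (S4) there are $u_1,u_2,u_3\ne1$ such that there are no $x,y$ with $u_3=x^{-1}u_2^{-1}xy^{-1}u_1^{-1}y$. $H=\bigoplus_{i\in\mathbb Z}H_i$, each $H_i$ a copy of $P$, elements finitely supported sequences; $(h)_j$ is the element with $h$ at coordinate $j$ and $1$ elsewhere, and juxtaposition is the product in $H$. $\alpha((h_i)_i)=(h_{i+1})_i$. For $k>0$, $\bar h$ is a $[k,t]$-commutator if $\bar h=\bar g_1\alpha(\bar g_1^{-1})\cdots\bar g_k\alpha(\bar g_k^{-1})$ for some $\bar g_i\in H$; for $k<0$, if $\bar h=\alpha(\bar g_1)\bar g_1^{-1}\cdots\alpha(\bar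 g_{|k|})\bar g_{|k|}^{-1}$ for some $\bar g_i\in H$. $\bar h$ is a $[\pm,t]$-commutator if $\bar h=\bar g_1\alpha(\bar g_1^{-1})\alpha(\bar g_2)\bar g_2^{-1}$ or $\bar h=\alpha(\bar g_1)\bar g_1^{-1}\bar g_2\alpha(\bar g_2^{-1})$ for some $\bar g_1,\bar g_2\in H$. *)

(* Defs.v *)
From Stdlib Require List.
From mathcomp Require Import all_boot all_order all_algebra all_fingroup.
Set Implicit Arguments. Unset Strict Implicit. Unset Printing Implicit Defensive.
Import GRing.Theory Num.Theory.

Local Open Scope group_scope.

Section Defs.
Variable gT : finGroupType.

(* Conditions (S1)-(S4) on the finite group P (= all of gT). *)
Definition S1 : Prop := forall a1 a2 : gT,
  exists x y : gT, a2 = x^-1 * a1^-1 * y * x * y^-1.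
Definition S2 : Prop := forall a1 a2 a3 : gT,
  exists u v : gT, a2 = a3 * u * a1^-1 * a3^-1 * v * u^-1 * v^-1.
Definition S3 : Prop := forall u1 u2 u3 u4 : gT,
  u1 != 1 -> u2 != 1 -> u3 != 1 -> u4 != 1 ->
  exists x y z : gT, u4 = x^-1 * u1 * x * y^-1 * u2 * y * z^-1 * u3 * z.
Definition S4 : Prop := exists u1 u2 u3 : gT,
  [/\ u1 != 1, u2 != 1, u3 != 1 &
   ~ exists x y : gT, u3 = x^-1 * u2^-1 * x * y^-1 * u1^-1 * y].

(* Elements of H = (+)_{i in Z} P are finitely supported functions int -> gT. *)
Definition finsupp (f : int -> gT) : Prop :=
  exists N : nat, forall i : int, (N < `|i|)%N -> f i = 1.

Definition Hone : int -> gT := fun _ => 1.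
Definition Hmul (f g : int -> gT) : int -> gT := fun i => f i * g i.
Definition Hinv (f : int -> gT) : int -> gT := fun i => (f i)^-1.
Definition Halpha (f : int -> gT) : int -> gT := fun i => f (i + 1)%R.
Definition Hsingle (h : gT) (j : int) : int -> gT :=
  fun i => if i == j then h else 1.
Definition Hprod (s : seq (int -> gT)) : int -> gT := foldr Hmul Hone s.

(* [k,t]-commutator, k an integer (meaningful for k <> 0) *)
Definition kt_comm (k : int) (h : int -> gT) : Prop :=
  exists gs : seq (int -> gT),
    [/\ size gs = `|k|%N, (forall g, List.In g gs -> finsupp g) &
     h = Hprod [seq (if (0 < k)%R then Hmul g (Halpha (Hinv g))
                     else Hmul (Halpha g) (Hinv g)) | g <- gs]].

Definition pm_comm (h : int -> gT) : Prop :=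
  exists g1 g2 : int -> gT, [/\ finsupp g1, finsupp g2 &
    h = Hmul (Hmul g1 (Halpha (Hinv g1))) (Hmul (Halpha g2) (Hinv g2)) \/
    h = Hmul (Hmul (Halpha g1) (Hinv g1)) (Hmul g2 (Halpha (Hinv g2)))].
End Defs.

(* Main.v *)
Require Import Defs.
From mathcomp Require Import all_boot all_order all_algebra all_fingroup.
From mathcomp Require Import zify.
From Stdlib Require Import FunctionalExtensionality.
Import GRing.Theory Num.Theory.
Set Implicit Arguments. Unset Strict Implicit. Unset Printing Implicit Defensive.
Local Open Scope group_scope.

Section Transfer.
Variables (gT : finGroupType) (S T : Type) (e : S) (K : S -> T) (F : S -> S -> gT).
Hypothesis FK1 : forall s t, F s t = 1 -> K s = K t.
Hypothesis Fee : F e e = 1.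
Variables (s : int -> S) (Ns : nat).
Hypothesis sfin : forall i, (Ns < `|i|)%N -> s i = e.
Variable hb : int -> gT.
Hypothesis Hb : forall i, hb i = F (s i) (s (i+1)%R).

Lemma stretch_nat a (n : nat) : (forall i, (a <= i < a + n%:Z)%R -> hb i = 1) ->
  K (s a) = K (s (a + n%:Z)%R).
Proof.
elim: n => [|n IH] H; first by rewrite addr0.
rewrite IH; last by move=> i Hi; apply: H; lia.
have -> : (a + n.+1%:Z = (a + n%:Z) + 1)%R by lia.
apply: FK1; rewrite -Hb; apply: H; lia.
Qed.

Lemma stretch a b : (a <= b)%R -> (forall i, (a <= i < b)%R -> hb i = 1) ->
  K (s a) = K (s b).
Proof.
move=> Hab H.
have Eb : b = (a + (`|b - a|%N)%:Z)%R by lia.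
rewrite Eb; apply: stretch_nat; rewrite -Eb //.
Qed.

Lemma above a : (forall i, (a <= i)%R -> hb i = 1) -> K (s a) = K e.
Proof.
move=> H; rewrite (@stretch a (a + (Ns + `|a| + 1)%N%:Z)%R); first 1 last.
- lia.
- by move=> i Hi; apply: H; lia.
by rewrite sfin //; lia.
Qed.

Lemma below a : (forall i, (i < a)%R -> hb i = 1) -> K (s a) = K e.
Proof.
move=> H; rewrite -(@stretch (a - (Ns + `|a| + 1)%N%:Z)%R a); first 1 last.
- lia.
- by move=> i Hi; apply: H; lia.
by rewrite sfin //; lia.
Qed.

Variables (l : nat) (idx : 'I_l -> int) (hs : 'I_l -> gT).
Hypothesis hidx : forall j1 j2 : 'I_l, (j1 < j2)%N -> (idx j1 < idx j2)%R.
Hypothesis H1 : forall j, hb (idx j) = hs j.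
Hypothesis H0 : forall i, (forall j, idx j != i) -> hb i = 1.
Variable hb' : int -> gT.
Hypothesis H1' : forall j : 'I_l, hb' (Posz j.+1) = hs j.
Hypothesis H0' : forall i, (forall j : 'I_l, Posz j.+1 != i) -> hb' i = 1.

Lemma idx_le (j1 j2 : 'I_l) : (j1 <= j2)%N -> (idx j1 <= idx j2)%R.
Proof.
rewrite leq_eqVlt => /orP [/eqP E|/hidx /Order.POrderTheory.ltW //].
by rewrite (val_inj E).
Qed.

Lemma gap (j j' : 'I_l) : val j' = (val j).+1 ->
  forall i, (idx j + 1 <= i < idx j')%R -> hb i = 1.
Proof.
move=> Ej i Hi; apply: H0 => j''; apply/eqP => E.
case: (leqP j'' j) => Hl.
  have := idx_le Hl; lia.
have : (j' <= j'')%N by rewrite Ej.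
move/idx_le; lia.
Qed.

Lemma top (j : 'I_l) : val j = l.-1 -> forall i, (idx j + 1 <= i)%R -> hb i = 1.
Proof.
move=> Ej i Hi; apply: H0 => j''; apply/eqP => E.
have : (j'' <= j)%N by rewrite Ej; have := ltn_ord j''; lia.
move/idx_le; lia.
Qed.

Lemma bottom (j : 'I_l) : val j = 0%N -> forall i, (i < idx j)%R -> hb i = 1.
Proof.
move=> Ej i Hi; apply: H0 => j''; apply/eqP => E.
have : (j <= j'')%N by rewrite Ej.
move/idx_le; lia.
Qed.

Lemma H0'n (n : nat) : (l <= n)%N -> hb' (Posz n.+1) = 1.
Proof. move=> Hn; apply: H0' => j; apply/eqP => [[E]]; have := ltn_ord j; lia. Qed.

Lemma H0'neg (n : nat) : hb' (Negz n) = 1.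
Proof. by apply: H0' => j. Qed.

Lemma H0'0 : hb' (Posz 0) = 1.
Proof. by apply: H0' => j. Qed.

Definition s1 (m : int) : S :=
  match m with
  | Posz n.+1 => match (insub n : option 'I_l) with Some j => s (idx j) | None => e end
  | _ => e end.

Lemma s1_in (j : 'I_l) : s1 (Posz j.+1) = s (idx j).
Proof.
rewrite /s1; case: insubP => [u _ /val_inj -> //|]; by rewrite ltn_ord.
Qed.

Lemma s1_out (n : nat) : (l <= n)%N -> s1 (Posz n.+1) = e.
Proof.
move=> Hn; rewrite /s1; case: insubP => [u Hu Eu|//]; exfalso; move: Hu; lia.
Qed.

Lemma s1_nonpos m : (m <= 0)%R -> s1 m = e.
Proof. by case: m => [[|n]|n]. Qed.

Hypothesis F1 : forall s t t', K t = K t' -> F s t = F s t'.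

Lemma form1 : exists s' : int -> S, (exists N, forall i, (N < `|i|)%N -> s' i = e) /\
  forall i, hb' i = F (s' i) (s' (i+1)%R).
Proof.
exists s1; split.
  exists l => -[[|n]|n] Hi //; apply: s1_out; move: Hi; lia.
case=> [[|n]|n].
- rewrite H0'0 add0r (s1_nonpos (Order.POrderTheory.lexx _)).
  case: (ltnP 0 l) => Hl; last by rewrite s1_out.
  pose j0 := Ordinal Hl.
  rewrite (s1_in j0) -Fee; apply: F1; rewrite (below (bottom (j:=j0) erefl)) //.
- case: (ltnP n l) => Hn; last first.
    have -> : (Posz n.+1 + 1 = Posz n.+2)%R by lia.
    rewrite H0'n // s1_out // s1_out ?Fee //; lia.
  pose j := Ordinal Hn.
  rewrite (_ : n = val j) // H1' -H1 Hb s1_in.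
  apply: F1.
  have -> : (Posz j.+1 + 1 = Posz (j.+1).+1)%R by lia.
  case: (ltnP j.+1 l) => Hn'.
    pose j' := Ordinal Hn'.
    rewrite (_ : (j.+1) = val j') // s1_in; apply: stretch.
      have := hidx (ltnSn j : (j < j')%N); lia.
    exact: gap.
  rewrite s1_out //; apply: above; apply: (top (j:=j)) => /=; move: Hn'; rewrite /j /=; lia.
- rewrite H0'neg !s1_nonpos //; lia.
Qed.

Definition s2 (m : int) : S :=
  match m with
  | Posz n.+2 => match (insub n : option 'I_l) with Some j => s (idx j + 1)%R | None => e end
  | _ => e end.

Lemma s2_in (j : 'I_l) : s2 (Posz j.+2) = s (idx j + 1)%R.
Proof.
rewrite /s2; case: insubP => [u _ /val_inj -> //|]; by rewrite ltn_ord.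
Qed.

Lemma s2_out (n : nat) : (l <= n)%N -> s2 (Posz n.+2) = e.
Proof.
move=> Hn; rewrite /s2; case: insubP => [u Hu Eu|//]; exfalso; move: Hu; lia.
Qed.

Lemma s2_small m : (m <= 1)%R -> s2 m = e.
Proof. by case: m => [[|[|n]]|n]. Qed.

Hypothesis F2 : forall s s' t, K s = K s' -> F s t = F s' t.

Lemma form2 : exists s' : int -> S, (exists N, forall i, (N < `|i|)%N -> s' i = e) /\
  forall i, hb' i = F (s' i) (s' (i+1)%R).
Proof.
exists s2; split.
  exists l.+1 => -[[|[|n]]|n] Hi //; apply: s2_out; move: Hi; lia.
case=> [[|n]|n].
- by rewrite H0'0 add0r !s2_small.
- have -> : (Posz n.+1 + 1 = Posz n.+2)%R by lia.
  case: (ltnP n l) => Hn; last first.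
    rewrite H0'n // s2_out //.
    case: n Hn => [|m] Hm; first by rewrite s2_small.
    case: (ltnP m l) => Hml; last by rewrite s2_out.
    pose j := Ordinal Hml.
    rewrite (_ : m = val j) // s2_in -Fee; apply: F2.
    symmetry; apply: above; apply: (top (j:=j)) => /=; lia.
  pose j := Ordinal Hn.
  rewrite (_ : n = val j) // H1' -H1 Hb s2_in.
  apply: F2.
  case Ej: (val j) => [|m].
    by rewrite s2_small // (below (bottom Ej)).
  have Hm : (m < l)%N by have := Hn; move: Ej; rewrite /=; lia.
  pose j'' := Ordinal Hm.
  rewrite (_ : m = val j'') // s2_in; symmetry; apply: stretch.
    have Hlt : (j'' < j)%N by move: Ej; rewrite /=; lia.
    have := hidx Hlt; lia.
  by apply: gap; rewrite Ej.
- rewrite H0'neg !s2_small //; lia.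
Qed.

End Transfer.


Section G.
Variables (gT : finGroupType) (c : int -> gT).

Definition T a M i := \prod_(j < M) (if (i <= a + j%:Z)%R then c (a + j%:Z)%R else 1).

Lemma T_rec a M i : T a M.+1 i = (if (i <= a)%R then c a else 1) * T (a + 1)%R M i.
Proof.
rewrite /T big_ord_recl addr0; congr (_ * _); apply: eq_bigr => j _.
by have -> : (a + (lift ord0 j : nat)%:Z = a + 1 + j%:Z)%R by rewrite lift0; lia.
Qed.

Lemma T_low a M i : (i <= a)%R -> T a M i = \prod_(j < M) c (a + j%:Z)%R.
Proof. move=> H; apply: eq_bigr => j _; case: ifP => // /negbT; lia. Qed.

Lemma T_high a M i : (a + M%:Z <= i)%R -> T a M i = 1.
Proof. move=> H; apply: big1 => j _; case: ifP => // Hc; have := ltn_ord j; lia. Qed.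

Lemma T_step a M i : (a <= i < a + M%:Z)%R -> T a M i = c i * T a M (i + 1)%R.
Proof.
elim: M a => [|M IH] a H; first by exfalso; lia.
rewrite !T_rec.
have [->|Hne] := eqVneq i a.
  rewrite Order.POrderTheory.lexx ifF; last by apply/negbTE; lia.
  by rewrite mul1g !T_low //; lia.
rewrite ifF; last by apply/negbTE; lia.
rewrite ifF; last by apply/negbTE; lia.
rewrite !mul1g IH //; lia.
Qed.

Lemma Gplus a M : (forall i, c i != 1 -> (a <= i < a + M%:Z)%R) ->
  \prod_(j < M) c (a + j%:Z)%R = 1 ->
  exists g, finsupp g /\ forall i, c i = g i * (g (i + 1)%R)^-1.
Proof.
move=> Hsupp Hp; exists (T a M); split.
  exists (`|a| + M)%N => i Hi.
  case: (boolP (i < a)%R) => Hia.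
    by rewrite T_low //; lia.
  by rewrite T_high //; lia.
move=> i.
have c1 : ~~ (a <= i < a + M%:Z)%R -> c i = 1.
  by move=> H; apply/eqP; apply: contraT => /Hsupp; move: H; case: (_ && _).
case: (boolP (i < a)%R) => Hia.
  by rewrite c1 ?T_low ?Hp ?invg1 ?mulg1 //; lia.
case: (boolP (i < a + M%:Z)%R) => Hi2.
  by rewrite T_step ?mulgK //; lia.
by rewrite c1 ?T_high ?invg1 ?mulg1 //; lia.
Qed.
End G.

Lemma prod_split (gT : finGroupType) (c : int -> gT) (N : nat) :
  \prod_(j < (2*N+4)) c (- N%:Z - 2 + j%:Z)%R =
  c (- N%:Z - 2)%R * c (- N%:Z - 1)%R * \prod_(j < (2*N+1)) c (- N%:Z + j%:Z)%R * c (N%:Z + 1)%R.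
Proof.
have -> : (2*N+4 = (2*N+1).+1.+2)%N by lia.
rewrite 2!big_ord_recl big_ord_recr /= !mulgA.
congr (_ * _ * _ * _).
- by congr c; lia.
- by congr c; rewrite /bump /=; lia.
- by apply: eq_bigr => j _; congr c; rewrite /bump /=; lia.
- by congr c; rewrite /bump /=; lia.
Qed.


Lemma Dec (gT : finGroupType) (hS1 : S1 gT) (h : int -> gT) : finsupp h ->
  exists g1 g2, [/\ finsupp g1, finsupp g2 &
   forall i, h i = (g1 i * (g1 (i+1)%R)^-1) * (g2 i * (g2 (i+1)%R)^-1)].
Proof.
move=> [N HN].
pose H0 := \prod_(j < (2*N+1)) h (- N%:Z + j%:Z)%R.
have [x [y Hxy]] := hS1 1 H0.
pose c1 (i : int) := if i == (- N%:Z - 2)%R then y else if i == (- N%:Z - 1)%R then x^-1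
   else if i == (N%:Z + 1)%R then x * y^-1 else 1.
pose c2 i := (c1 i)^-1 * h i.
have e1 : c1 (- N%:Z - 2)%R = y by rewrite /c1 eqxx.
have e2 : c1 (- N%:Z - 1)%R = x^-1.
  by rewrite /c1; case: eqP => [E|_]; [exfalso; lia | rewrite eqxx].
have e3 : c1 (N%:Z + 1)%R = x * y^-1.
  rewrite /c1; case: eqP => [E|_]; first (exfalso; lia).
  by case: eqP => [E|_]; [exfalso; lia | rewrite eqxx].
have emid : forall i, (- N%:Z <= i <= N%:Z)%R -> c1 i = 1.
  move=> i Hi; rewrite /c1; case: eqP => [E|_]; first (exfalso; lia).
  case: eqP => [E|_]; first (exfalso; lia).
  by case: eqP => [E|_]; first (exfalso; lia).
have hout : forall i, h i != 1 -> (- N%:Z <= i <= N%:Z)%R.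
  move=> i Hh; case: (boolP (- N%:Z <= i <= N%:Z)%R) => // Hi; exfalso.
  by apply: (negP Hh); apply/eqP; apply: HN; lia.
have c1s : forall i, c1 i != 1 -> (- N%:Z - 2 <= i < - N%:Z - 2 + (2*N+4)%N%:Z)%R.
  move=> i; rewrite /c1; case: ifP => [/eqP E|_]; first (move=> _; lia).
  case: ifP => [/eqP E|_]; first (move=> _; lia).
  case: ifP => [/eqP E|_]; first (move=> _; lia).
  by rewrite eqxx.
have hN2 : h (- N%:Z - 2)%R = 1 by apply: HN; lia.
have hN1 : h (- N%:Z - 1)%R = 1 by apply: HN; lia.
have hP1 : h (N%:Z + 1)%R = 1 by apply: HN; lia.
have [g1 [fg1 Eg1]] : exists g, finsupp g /\ forall i, c1 i = g i * (g (i + 1)%R)^-1.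
  apply: (@Gplus _ c1 (- N%:Z - 2)%R (2*N+4)) => //.
  rewrite prod_split e1 e2 e3 big1 ?mulg1; last by move=> j _; apply: emid; have := ltn_ord j; lia.
  by rewrite mulgA mulgKV mulgV.
have [g2 [fg2 Eg2]] : exists g, finsupp g /\ forall i, c2 i = g i * (g (i + 1)%R)^-1.
  apply: (@Gplus _ c2 (- N%:Z - 2)%R (2*N+4)).
    move=> i; rewrite /c2; case: (eqVneq (c1 i) 1) => [E|/c1s //].
    rewrite E invg1 mul1g => /hout; lia.
  rewrite prod_split /c2 e1 e2 e3 hN2 hN1 hP1 !mulg1.
  rewrite (eq_bigr (fun j : 'I_(2*N+1) => h (- N%:Z + j%:Z)%R)); last first.
    by move=> j _; rewrite emid ?invg1 ?mul1g //; have := ltn_ord j; lia.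
  rewrite -/H0 Hxy invg1 mulg1 invMg invgK !mulgA.
  by rewrite !mulgK mulVg.
exists g1, g2; split => // i.
by rewrite -Eg1 -Eg2 /c2 mulKVg.
Qed.

Lemma DecN (gT : finGroupType) (hS1 : S1 gT) (h : int -> gT) : finsupp h ->
  exists g1 g2, [/\ finsupp g1, finsupp g2 &
   forall i, h i = (g1 (i+1)%R * (g1 i)^-1) * (g2 (i+1)%R * (g2 i)^-1)].
Proof.
move=> [N HN].
have [|g1 [g2 [[N1 f1] [N2 f2] E]]] := @Dec gT hS1 (fun i => h (- i - 1)%R).
  by exists N.+1 => i Hi; apply: HN; lia.
exists (fun i => g1 (- i)%R), (fun i => g2 (- i)%R); split.
- by exists N1 => i Hi; apply: f1; lia.
- by exists N2 => i Hi; apply: f2; lia.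
move=> i; have := E (- i - 1)%R.
have -> : (- (- i - 1) - 1 = i)%R by lia.
have -> : (- i - 1 + 1 = - i)%R by lia.
by have -> : (- (i + 1) = - i - 1)%R by lia.
Qed.


Section Sing.
Variables (gT : finGroupType) (l : nat) (idx : 'I_l -> int) (hs : 'I_l -> gT).

Lemma HP0 (r : seq 'I_l) i : (forall j, j \in r -> idx j != i) ->
  Hprod [seq Hsingle (hs j) (idx j) | j <- r] i = 1.
Proof.
elim: r => [|x r IH] H //=.
rewrite /Hmul /Hsingle ifF ?mul1g; last by apply/negbTE; rewrite eq_sym H // inE eqxx.
by rewrite IH // => j jr; apply: H; rewrite inE jr orbT.
Qed.

Lemma HP1 (r : seq 'I_l) j : injective idx -> uniq r -> j \in r ->
  Hprod [seq Hsingle (hs j) (idx j) | j <- r] (idx j) = hs j.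
Proof.
move=> inj; elim: r => [|x r IH] //= /andP [xr ur]; rewrite inE => /orP [/eqP ->|jr].
  rewrite /Hmul /Hsingle eqxx HP0 ?mulg1 // => j' j'r; apply/eqP => /inj E.
  by move: xr; rewrite -E j'r.
rewrite /Hmul /Hsingle ifF ?mul1g ?IH //; apply/negbTE; apply/eqP => /inj E.
by move: xr; rewrite -E jr.
Qed.
End Sing.

Lemma eqF1 (gT : finGroupType) (x y : gT) : x * y^-1 = 1 -> x = y.
Proof. by move/eqP; rewrite -eq_mulgV1 => /eqP. Qed.
Lemma eqF2 (gT : finGroupType) (x y : gT) : y * x^-1 = 1 -> x = y.
Proof. by move/eqF1. Qed.

Lemma Hmul_eval (gT : finGroupType) (f g : int -> gT) i : Hmul f g i = f i * g i.
Proof. by []. Qed.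

Lemma pmK1 (gT : finGroupType) (x1 x2 y1 y2 : gT) :
  (x1 * y1^-1) * (y2 * x2^-1) = 1 -> x1^-1 * x2 = y1^-1 * y2.
Proof. by rewrite mulgA => /eqF1 H; rewrite -H !mulgA mulVg mul1g. Qed.

Lemma pmR (gT : finGroupType) (x1 x2 y1 y2 : gT) :
  (x1 * y1^-1) * (y2 * x2^-1) = x1 * (y1^-1 * y2) * x2^-1.
Proof. by rewrite !mulgA. Qed.

Lemma Hprod_nseq (gT : finGroupType) (G : (int -> gT) -> int -> gT) n i :
  (forall i, G (@Hone gT) i = 1) -> Hprod [seq G g | g <- nseq n (@Hone gT)] i = 1.
Proof. move=> HG; elim: n => [|n IH] //=; by rewrite /Hmul HG IH mulg1. Qed.

Lemma In_nseq (T : Type) (x y : T) n : List.In x (nseq n y) -> x = y.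
Proof. elim: n => [|n IH] //= [-> //|]; exact: IH. Qed.

Theorem lemma4p8 (gT : finGroupType)
  (hS1 : S1 gT) (hS2 : S2 gT) (hS3 : S3 gT) (hS4 : S4 gT)
  (l : nat) (idx : 'I_l -> int) (hs : 'I_l -> gT)
  (hidx : forall j1 j2 : 'I_l, (j1 < j2)%N -> (idx j1 < idx j2)%R)
  (hne : forall j : 'I_l, hs j != 1) :
  let hbar := Hprod [seq Hsingle (hs j) (idx j) | j <- enum 'I_l] in
  let hbar' := Hprod [seq Hsingle (hs j) (Posz j.+1) | j <- enum 'I_l] in
  (forall k : int, k != 0%R -> kt_comm k hbar -> kt_comm k hbar') /\
  (pm_comm hbar -> pm_comm hbar').
Proof.
move=> hbar hbar'.
have inj : injective idx.
  move=> a b E; apply/eqP; case: (ltngtP a b) => [/hidx|/hidx|/val_inj ->//]; lia.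
have inj' : injective (fun j : 'I_l => Posz j.+1).
  by move=> a b [E]; apply: val_inj.
have H1 : forall j, hbar (idx j) = hs j.
  by move=> j; apply: HP1 => //; rewrite ?enum_uniq ?mem_enum.
have H0 : forall i, (forall j, idx j != i) -> hbar i = 1.
  by move=> i H; apply: HP0 => j _.
have H1' : forall j : 'I_l, hbar' (Posz j.+1) = hs j.
  by move=> j; apply: (HP1 (idx := fun j : 'I_l => Posz j.+1)) => //; rewrite ?enum_uniq ?mem_enum.
have H0' : forall i, (forall j : 'I_l, Posz j.+1 != i) -> hbar' i = 1.
  by move=> i H; apply: HP0 => j _.
have fin' : finsupp hbar'.
  exists l => i Hi; apply: H0' => j; apply/eqP => E; have := ltn_ord j; lia.
split.
- move=> k k0 [gs [Hsz Hfin Heq]].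
  have Hev : forall i, hbar i = Hprod [seq (if (0 < k)%R then Hmul g (Halpha (Hinv g))
                     else Hmul (Halpha g) (Hinv g)) | g <- gs] i by move=> i; rewrite Heq.
  case: (boolP (`|k| == 1)%N) => Hk1.
    case: gs Hsz Hfin Heq Hev => [|g [|? ?]] //= Hsz Hfin _ Hev; try lia.
    have fg : finsupp g by apply: Hfin; left.
    case: fg => Ng fg.
    case Hk: (0 < k)%R in Hev *.
      have [s' [[N' fs'] Es']] := form1 (K := id) (F := fun s t => s * t^-1)
        (e := 1) (s := g) (Ns := Ng) (hb := hbar) (idx := idx) (hs := hs) (hb' := hbar')
        (@eqF1 gT) (mulgV 1) fg
        (fun i => etrans (Hev i) (mulg1 _)) hidx H1 H0 H1' H0' (fun s t t' E => congr1 _ (congr1 _ E)).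
      exists [:: s']; split => //=.
        by move=> g' [<-|//]; exists N'.
      by apply: functional_extensionality => i; rewrite Hk /Hmul /Halpha /Hinv /Hone mulg1 Es'.
    have [s' [[N' fs'] Es']] := form1 (K := id) (F := fun s t => t * s^-1)
        (e := 1) (s := g) (Ns := Ng) (hb := hbar) (idx := idx) (hs := hs) (hb' := hbar')
        (@eqF2 gT) (mulgV 1) fg
        (fun i => etrans (Hev i) (mulg1 _)) hidx H1 H0 H1' H0' (fun s t t' E => congr1 (fun x => x * _) E).
    exists [:: s']; split => //=.
      by move=> g' [<-|//]; exists N'.
    by apply: functional_extensionality => i; rewrite Hk /Hmul /Halpha /Hinv /Hone mulg1 Es'.
  have Hk2 : (2 <= `|k|)%N by move: k0 Hk1; lia.
  case Hk: (0 < k)%R.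
    have [g1 [g2 [f1 f2 E]]] := Dec hS1 fin'.
    exists [:: g1, g2 & nseq (`|k| - 2) (@Hone gT)]; split.
    + by rewrite /= size_nseq; lia.
    + move=> g /= H; case: H => [<-//|H]; case: H => [<-//|H]; rewrite (In_nseq H); by exists 0%N.
    + apply: functional_extensionality => i; rewrite Hk /= Hmul_eval E !Hmul_eval.
      rewrite Hprod_nseq ?mulg1 //; last by move=> i'; rewrite /Hmul /Halpha /Hinv /Hone invg1 mulg1.
  have [g1 [g2 [f1 f2 E]]] := DecN hS1 fin'.
  exists [:: g1, g2 & nseq (`|k| - 2) (@Hone gT)]; split.
  + by rewrite /= size_nseq; lia.
  + move=> g /= H; case: H => [<-//|H]; case: H => [<-//|H]; rewrite (In_nseq H); by exists 0%N.
  + apply: functional_extensionality => i; rewrite Hk /= Hmul_eval E !Hmul_eval.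
    rewrite Hprod_nseq ?mulg1 //; last by move=> i'; rewrite /Hmul /Halpha /Hinv /Hone invg1 mulg1.
- move=> [g1 [g2 [[N1 f1] [N2 f2] [E|E]]]].
  + have [s' [[N' fs'] Es']] := form1 (K := fun s : gT * gT => s.1^-1 * s.2)
        (F := fun s t : gT * gT => (s.1 * t.1^-1) * (t.2 * s.2^-1))
        (e := (1, 1)) (s := fun i => (g1 i, g2 i)) (Ns := maxn N1 N2)
        (hb := hbar) (idx := idx) (hs := hs) (hb' := hbar')
        (fun s t => @pmK1 gT _ _ _ _) ltac:(by rewrite /= invg1 !mulg1)
        (fun i Hi => ltac:(by rewrite /= f1 ?f2 //; lia))
        (fun i => ltac:(by rewrite E))
        hidx H1 H0 H1' H0'
        (fun s t t' Ek => ltac:(by rewrite /= !pmR Ek)).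
    exists (fun i => (s' i).1), (fun i => (s' i).2); split.
    * by exists N' => i Hi; rewrite fs'.
    * by exists N' => i Hi; rewrite fs'.
    * by left; apply: functional_extensionality => i; rewrite Es'.
  + have [s' [[N' fs'] Es']] := form2 (K := fun s : gT * gT => s.1^-1 * s.2)
        (F := fun s t : gT * gT => (t.1 * s.1^-1) * (s.2 * t.2^-1))
        (e := (1, 1)) (s := fun i => (g1 i, g2 i)) (Ns := maxn N1 N2)
        (hb := hbar) (idx := idx) (hs := hs) (hb' := hbar')
        (fun s t H => esym (@pmK1 gT _ _ _ _ H)) ltac:(by rewrite /= invg1 !mulg1)
        (fun i Hi => ltac:(by rewrite /= f1 ?f2 //; lia))
        (fun i => ltac:(by rewrite E))
        hidx H1 H0 H1' H0'
        (fun s s' t Ek => ltac:(by rewrite /= !pmR Ek)).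
    exists (fun i => (s' i).1), (fun i => (s' i).2); split.
    * by exists N' => i Hi; rewrite fs'.
    * by exists N' => i Hi; rewrite fs'.
    * by right; apply: functional_extensionality => i; rewrite Es'.
Qed.
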